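(* Let $A\in\mathbb{R}^{n\times n}$ have rank one. Then $A$ is a Karamardian matrix if and only if $(A^{\dagger})^T$ is a Karamardian matrix. Moreover, if $A$ is Karamardian then both $A^T$ and $A^{\dagger}$ are row monotone.
   Context: $A^{\dagger}$ denotes the Moore–Penrose inverse of $A$. A square matrix $M$ is row monotone if $Mx\ge 0$ and $x\in R(M^T)$ imply $x\ge 0$. For $A\in\mathbb{R}^{n\times n}$ let $K_A=\mathbb{R}^n_+\cap R(A)$ and $K_A^*=\{y\in\mathbb{R}^n: x^Ty\ge 0 \text{ for all } x\in K_A\}$ (one has $K_A^*=\mathbb{R}^n_++N(A^T)$, and its interior is $\{a+b: a>0,\ b\in N(A^T)\}$). For $q\in\mathbb{R}^n$, LCP$(A,K_A,q)$ is to find $x$ with $x\in K_A$, $Ax+q\in K_A^*$, $x^T(Ax+q)=0$. $A$ is a Karamardian matrix if $K_A\ne\{0\}$ and there exists $d$ in the interior of $K_A^*$ such that both LCP$(A,K_A,0)$ and LCP$(A,K_A,d)$ have $x=0$ as their only solution. *)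

(* Defs.v *)
From HB Require Import structures.
From mathcomp Require Import all_boot all_order all_algebra.
From mathcomp Require Import reals.
Set Implicit Arguments. Unset Strict Implicit. Unset Printing Implicit Defensive.
Import Order.TTheory GRing.Theory Num.Theory.
Local Open Scope ring_scope.

Section Defs.
Variables (R : realType) (n : nat).

Definition nonneg (x : 'cV[R]_n) : Prop := forall i, 0 <= x i 0.
Definition pos (x : 'cV[R]_n) : Prop := forall i, 0 < x i 0.

Definition in_range (M : 'M[R]_n) (x : 'cV[R]_n) : Prop := exists y, x = M *m y.
Definition in_null (M : 'M[R]_n) (x : 'cV[R]_n) : Prop := M *m x = 0.

Definition is_MP_inverse (A X : 'M[R]_n) : Prop :=
  [/\ A *m X *m A = A, X *m A *m X = X,
      (A *m X)^T = A *m X & (X *m A)^T = X *m A].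

Definition row_monotone (M : 'M[R]_n) : Prop :=
  forall x : 'cV[R]_n, nonneg (M *m x) -> in_range M^T x -> nonneg x.

Definition dotv (x y : 'cV[R]_n) : R := (x^T *m y) 0 0.

Definition K (A : 'M[R]_n) (x : 'cV[R]_n) : Prop := nonneg x /\ in_range A x.

Definition Kdual (A : 'M[R]_n) (y : 'cV[R]_n) : Prop :=
  forall x, K A x -> 0 <= dotv x y.

(* topological interior of K_A^* (w.r.t. the sup norm on R^n) *)
Definition int_Kdual (A : 'M[R]_n) (y : 'cV[R]_n) : Prop :=
  exists2 e : R, 0 < e &
    forall z : 'cV[R]_n, (forall i, `|z i 0 - y i 0| < e) -> Kdual A z.

Definition LCP_sol (A : 'M[R]_n) (q x : 'cV[R]_n) : Prop :=
  [/\ K A x, Kdual A (A *m x + q) & dotv x (A *m x + q) = 0].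

Definition Karamardian (A : 'M[R]_n) : Prop :=
  (exists2 x, K A x & x != 0) /\
  exists2 d, int_Kdual A d &
    (forall x, LCP_sol A 0 x -> x = 0) /\ (forall x, LCP_sol A d x -> x = 0).

End Defs.

(* Main.v *)
Require Import Defs.
From HB Require Import structures.
From mathcomp Require Import all_boot all_order all_algebra.
From mathcomp Require Import reals.
Import Order.TTheory GRing.Theory Num.Theory.
Local Open Scope ring_scope.

From mathcomp Require Import ring lra.
Lemma rank1_decomp (R : realType) n (A : 'M[R]_n) :
  \rank A = 1%N -> exists u v : 'cV[R]_n, A = u *m v^T.
Proof.
move=> rA; rewrite -(mulmx_base A).
move: (col_base A) (row_base A); rewrite rA => C D.
by exists C, D^T; rewrite trmxK.
Qed.

Lemma MP_unique (R : realType) n (A X Y : 'M[R]_n) :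
  is_MP_inverse A X -> is_MP_inverse A Y -> X = Y.
Proof.
move=> [AXA XAX SAX SXA] [AYA YAY SAY SYA].
have eT : A^T = A^T *m Y^T *m A^T.
  by rewrite -{1}AYA !trmx_mul mulmxA.
have eT' : A^T = A^T *m X^T *m A^T.
  by rewrite -{1}AXA !trmx_mul mulmxA.
have hX : X = X *m A *m Y.
  have e1 : X = X *m (X^T *m A^T) by rewrite -trmx_mul SAX mulmxA XAX.
  have e2 : X^T *m (A^T *m Y^T *m A^T) = (A *m X) *m (A *m Y).
    by rewrite -SAX -SAY -!trmx_mul !mulmxA.
  by rewrite {1}e1 {1}eT e2 !mulmxA XAX.
have hY : Y = X *m A *m Y.
  have e1 : Y = A^T *m Y^T *m Y by rewrite -trmx_mul SYA YAY.
  have e2 : A^T *m X^T *m A^T *m Y^T = (X *m A) *m (Y *m A).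
    by rewrite -SXA -SYA -!trmx_mul !mulmxA.
  by rewrite {1}e1 {1}eT' e2 -mulmxA YAY.
by rewrite hY -hX.
Qed.

Lemma mulmx_r1 (R : realType) n (x y z w : 'cV[R]_n) :
  x *m y^T *m (z *m w^T) = (y^T *m z) 0 0 *: (x *m w^T).
Proof.
by rewrite mulmxA -(mulmxA x) {1}(mx11_scalar (y^T *m z)) mul_mx_scalar scalemxAl.
Qed.

Lemma nz_entry (R : realType) n (u : 'cV[R]_n) : u != 0 -> exists i, u i 0 != 0.
Proof.
move=> nz; case/boolP: [exists i, u i 0 != 0] => [/existsP//|/existsPn H].
case/negP: nz; apply/eqP/matrixP => i j.
by rewrite (ord1 j) mxE; move/negPn/eqP: (H i).
Qed.

Lemma sqn_gt0 (R : realType) n (u : 'cV[R]_n) : u != 0 -> 0 < (u^T *m u) 0 0.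
Proof.
move=> /nz_entry [i ui].
rewrite mxE (bigD1 i) //= mxE.
have h1 : 0 < u i 0 * u i 0 by rewrite lt_def mulf_neq0 //= -expr2 sqr_ge0.
have h2 : 0 <= \sum_(j < n | j != i) u^T 0 j * u j 0.
  by apply: sumr_ge0 => k _; rewrite mxE -expr2 sqr_ge0.
by apply: (lt_le_trans h1); rewrite lerDl.
Qed.

Lemma MP_r1 (R : realType) n (u v : 'cV[R]_n) :
  u != 0 -> v != 0 ->
  is_MP_inverse (u *m v^T)
    ((((v^T *m v) 0 0) * ((u^T *m u) 0 0))^-1 *: (v *m u^T)).
Proof.
move=> /sqn_gt0 bp /sqn_gt0 ap.
set a := (v^T *m v) 0 0 in ap *; set b := (u^T *m u) 0 0 in bp *.
have a0 : a != 0 by rewrite gt_eqF.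
have b0 : b != 0 by rewrite gt_eqF.
have AX : u *m v^T *m ((a * b)^-1 *: (v *m u^T)) = b^-1 *: (u *m u^T).
  rewrite -scalemxAr mulmx_r1 -/a scalerA; congr (_ *: _); field.
  by rewrite a0 b0.
have XA : ((a * b)^-1 *: (v *m u^T)) *m (u *m v^T) = a^-1 *: (v *m v^T).
  rewrite -scalemxAl mulmx_r1 -/b scalerA; congr (_ *: _); field.
  by rewrite a0 b0.
split.
- rewrite AX -scalemxAl mulmx_r1 -/b scalerA mulVf //.
  by rewrite scale1r.
- rewrite XA -scalemxAl -scalemxAr mulmx_r1 -/a !scalerA; congr (_ *: _); field.
  by rewrite a0 b0.
- by rewrite AX linearZ /= trmx_mul trmxK.
- by rewrite XA linearZ /= trmx_mul trmxK.
Qed.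

Section Scale.
Variables (R : realType) (n : nat).
Implicit Types (M : 'M[R]_n) (x y z : 'cV[R]_n).

Lemma dotvZr x y k : dotv x (k *: y) = k * dotv x y.
Proof. by rewrite /dotv -scalemxAr mxE. Qed.

Lemma dotvZl x y k : dotv (k *: x) y = k * dotv x y.
Proof. by rewrite /dotv linearZ /= -scalemxAl mxE. Qed.

Lemma dotvDr x y z : dotv x (y + z) = dotv x y + dotv x z.
Proof. by rewrite /dotv mulmxDr mxE. Qed.

Lemma in_range_scale M k x : k != 0 -> in_range (k *: M) x <-> in_range M x.
Proof.
move=> k0; split=> [[y ->]|[y ->]].
  by exists (k *: y); rewrite -scalemxAl scalemxAr.
exists (k^-1 *: y); rewrite -scalemxAl -scalemxAr scalerA mulfV //.
by rewrite scale1r.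
Qed.

Lemma K_scale M k x : k != 0 -> K (k *: M) x <-> K M x.
Proof. by move=> k0; rewrite /K in_range_scale. Qed.

Lemma Kdual_scaleM M k y : k != 0 -> Kdual (k *: M) y <-> Kdual M y.
Proof.
move=> k0; split=> H x Kx; apply: H.
  by rewrite K_scale.
by move: Kx; rewrite K_scale.
Qed.

Lemma Kdual_cone M k y : 0 < k -> Kdual M (k *: y) <-> Kdual M y.
Proof.
move=> kp; split=> H x Kx; have := H x Kx; rewrite ?dotvZr.
  by rewrite pmulr_rge0.
by move=> h; rewrite pmulr_rge0.
Qed.

Lemma int_Kdual_scaleM M k y : k != 0 -> int_Kdual (k *: M) y <-> int_Kdual M y.
Proof.
move=> k0; split=> [[e ep H]|[e ep H]]; exists e => // z /H; by rewrite Kdual_scaleM.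
Qed.

Lemma int_Kdual_cone M k d : 0 < k -> int_Kdual M d -> int_Kdual M (k *: d).
Proof.
move=> kp [e ep H]; exists (k * e); first by rewrite mulr_gt0.
move=> z hz.
have kip : 0 < k^-1 by rewrite invr_gt0.
rewrite -(@Kdual_cone M k^-1 z kip).
apply: H => i; rewrite mxE.
have := hz i; rewrite mxE => h.
have -> : k^-1 * z i 0 - d i 0 = k^-1 * (z i 0 - k * d i 0).
  by field; rewrite gt_eqF.
rewrite normrM gtr0_norm ?invr_gt0 //.
rewrite ltr_pdivrMl //.
Qed.
End Scale.

Section Scale2.
Variables (R : realType) (n : nat).
Implicit Types (M : 'M[R]_n) (x y z : 'cV[R]_n).

Lemma LCP_scale M k q x : 0 < k -> LCP_sol (k *: M) (k *: q) x <-> LCP_sol M q x.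
Proof.
move=> kp; have k0 : k != 0 by rewrite gt_eqF.
have e : (k *: M) *m x + k *: q = k *: (M *m x + q) by rewrite scalerDr scalemxAl.
rewrite /LCP_sol e; split=> [[h1 h2 h3]|[h1 h2 h3]]; split.
- by move: h1; rewrite K_scale.
- by move: h2; rewrite Kdual_scaleM // Kdual_cone.
- by move: h3; rewrite dotvZr => /eqP; rewrite mulf_eq0 (negbTE k0) /= => /eqP.
- by rewrite K_scale.
- by rewrite Kdual_scaleM // Kdual_cone.
- by rewrite dotvZr h3 mulr0.
Qed.

Lemma Karamardian_scale M k : 0 < k -> Karamardian M -> Karamardian (k *: M).
Proof.
move=> kp [[x Kx nx] [d di [H0 Hd]]]; have k0 : k != 0 by rewrite gt_eqF.
split; first by exists x; rewrite ?K_scale.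
exists (k *: d).
  by rewrite int_Kdual_scaleM //; apply: int_Kdual_cone.
split=> y.
  by have := @LCP_scale M k 0 y kp; rewrite scaler0 => ->; apply: H0.
by rewrite LCP_scale //; apply: Hd.
Qed.

Lemma Karamardian_scale_iff M k : 0 < k -> Karamardian M <-> Karamardian (k *: M).
Proof.
move=> kp; split; first exact: Karamardian_scale.
have kip : 0 < k^-1 by rewrite invr_gt0.
move=> /(@Karamardian_scale _ _ kip); rewrite scalerA mulVf ?scale1r //.
by rewrite gt_eqF.
Qed.

Lemma row_mono_scale M k : 0 < k -> row_monotone M -> row_monotone (k *: M).
Proof.
move=> kp H x hx hr; have k0 : k != 0 by rewrite gt_eqF.
apply: H.
  move=> i; have := hx i; rewrite -scalemxAl mxE.
  by rewrite pmulr_rge0.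
by move: hr; rewrite linearZ /= in_range_scale.
Qed.
End Scale2.

Lemma rank1_rowmono (R : realType) n (A : 'M[R]_n) (u v : 'cV[R]_n) :
  A = u *m v^T -> Karamardian A -> row_monotone A^T.
Proof.
move=> hA [[w [wnn [y0 wA]] wn0] [d [e ep He] [H0 Hd]]].
have Av y : A *m y = (v^T *m y) 0 0 *: u.
  by rewrite hA -mulmxA {1}(mx11_scalar (v^T *m y)) mul_mx_scalar.
set s := (v^T *m y0) 0 0.
have ws : w = s *: u by rewrite wA Av.
have s0 : s != 0.
  by apply: contra wn0 => /eqP s0; apply/eqP; rewrite ws s0 scale0r.
have Rspan z : in_range A z -> exists l, z = l *: w.
  move=> [y ->]; exists ((v^T *m y) 0 0 / s).
  by rewrite Av ws scalerA divfK.
have [i wi] := nz_entry _ _ _ wn0.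
have wip : 0 < w i 0 by rewrite lt_def wi wnn.
have Kspan z : K A z -> exists2 l, 0 <= l & z = l *: w.
  move=> [zn /Rspan [l zl]]; exists l => //.
  by have := zn i; rewrite zl mxE pmulr_lge0.
have Kw : K A w by split => //; exists y0.
have Kd_of y : 0 <= dotv w y -> Kdual A y.
  by move=> h z /Kspan [l l0 ->]; rewrite dotvZl mulr_ge0.
have Spos : 0 < dotv w (const_mx 1).
  rewrite /dotv mxE (bigD1 i) //= !mxE mulr1.
  have h2 : 0 <= \sum_(j < n | j != i) w^T 0 j * (const_mx 1 : 'cV[R]_n) j 0.
    by apply: sumr_ge0 => k _; rewrite !mxE mulr1 wnn.
  by apply: (lt_le_trans wip); rewrite lerDl.
have dpos : 0 < dotv w d.
  have hz j : `|(d + (- (e / 2)) *: (const_mx 1 : 'cV[R]_n)) j 0 - d j 0| < e.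
    rewrite !mxE mulr1 addrC addKr normrN gtr0_norm ?divr_gt0 //.
    lra.
  have := He _ hz w Kw.
  rewrite dotvDr dotvZr.
  have : 0 < e / 2 * dotv w (const_mx 1) by rewrite mulr_gt0 // divr_gt0.
  lra.
have wAw : 0 < dotv w (A *m w).
  case: (ltgtP (dotv w (A *m w)) 0) => [neg|//|zer].
    set a := dotv w (A *m w) in neg *.
    set t := dotv w d / (- a).
    have tp : 0 < t by rewrite divr_gt0 // oppr_gt0.
    have eq0 : t * a + dotv w d = 0 by rewrite /t; field; rewrite lt_eqF.
    have : t *: w = 0.
      apply: Hd; split.
      - split.
          by move=> j; rewrite mxE mulr_ge0 // ltW.
        by exists (t *: y0); rewrite -scalemxAr wA.
      - by apply: Kd_of; rewrite dotvDr -scalemxAr dotvZr -/a eq0.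
      - by rewrite dotvZl dotvDr -scalemxAr dotvZr -/a eq0 mulr0.
    by move/eqP; rewrite scaler_eq0 (gt_eqF tp) (negbTE wn0).
  have : w = 0.
    apply: H0; split => //.
      by apply: Kd_of; rewrite addr0 zer.
    by rewrite addr0 zer.
  by move/eqP; rewrite (negbTE wn0).
move=> x hx; rewrite trmxK => /Rspan [l xl].
have h : 0 <= dotv w (A^T *m x).
  rewrite /dotv mxE; apply: sumr_ge0 => j _; rewrite mxE mulr_ge0 //.
have eT : dotv w (A^T *m w) = dotv w (A *m w).
  have t11 (M : 'M[R]_1) : M^T 0 0 = M 0 0 by rewrite mxE.
  rewrite /dotv -t11.
  by rewrite !trmx_mul !trmxK mulmxA.
move: h; rewrite xl -scalemxAr dotvZr eT pmulr_lge0 // => l0.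
by move=> j; rewrite mxE mulr_ge0.
Qed.

Theorem mainTheorem8 (R : realType) (n : nat) (A Adag : 'M[R]_n) :
  \rank A = 1%N -> is_MP_inverse A Adag ->
  (Karamardian A <-> Karamardian Adag^T) /\
  (Karamardian A -> row_monotone A^T /\ row_monotone Adag).
Proof.
move=> rA MP.
have [u [v hA]] := rank1_decomp _ _ _ rA.
have u0 : u != 0.
  by apply/eqP => u0; move: rA; rewrite hA u0 mul0mx mxrank0.
have v0 : v != 0.
  by apply/eqP => v0; move: rA; rewrite hA v0 trmx0 mulmx0 mxrank0.
set k := (((v^T *m v) 0 0) * ((u^T *m u) 0 0))^-1.
have kp : 0 < k by rewrite invr_gt0 mulr_gt0 // sqn_gt0.
have hD : Adag = k *: A^T.
  have MP' := MP_r1 _ _ _ _ u0 v0; rewrite -hA in MP'.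
  by rewrite (MP_unique _ _ _ _ _ MP MP') hA trmx_mul trmxK.
have hDT : Adag^T = k *: A by rewrite hD linearZ /= trmxK.
split; first by rewrite hDT; apply: Karamardian_scale_iff.
move=> KA; split; first exact: rank1_rowmono _ _ _ _ _ hA KA.
rewrite hD; apply: row_mono_scale kp _; exact: rank1_rowmono _ _ _ _ _ hA KA.
Qed.
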